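(* Let $t\in T_2$ and let $\mathcal{T}_t$ be the variety of $\Omega$-algebras defined by the single identity $t(x,y)=x$. Then the quasivariety $\mathcal{T}_t\circ\mathcal{S}$ coincides with the variety $\mathcal{T}_t^{\,p}$. In particular $\mathcal{T}_t\circ\mathcal{S}$ is a variety, and $\{t(x,y)=x\}^p$ is an equational base for it.
   Context: Standing conventions: $\Omega$-algebras are of a plural similarity type, i.e. there are no nullary operation symbols and at least one operation symbol of arity $\ge 2$. For $n\ge 1$, $T_n$ denotes the set of $\Omega$-terms in the variables $x_1,\dots,x_n$ in which each of these $n$ variables actually occurs. An identity is regular if exactly the same variables occur on both sides. $\mathcal{S}$ denotes the variety of $\Omega$-semilattices: all $\Omega$-algebras of the given type satisfying every regular identity. For a class $\mathcal{V}$ of $\Omega$-algebras, the Mal'tsev product $\mathcal{V}\circ\mathcal{S}$ is the class of all $\Omega$-algebras $A$ having a congruence $\theta$ such that $A/\theta\in\mathcal{S}$ and every $\theta$-class (a subalgebra) belongs to $\mathcal{V}$. Prolongation: for an identity $\sigma$ of the form $u(y_1,\dots,y_n)=v(y_1,\dots,y_n)$ (variables of $u,v$ among $y_1,\dots,y_n$) and $m\ge1$, let $\sigma^p_m$ be the set of all identities $u(r_1,\dots,r_n)=v(r_1,\dots,r_n)$ obtained by substituting $r_i(x_1,\dots,x_m)$ for $y_i$, with $r_1,\dots,r_n$ ranging over $T_m$; $\sigma^p=\bigcup_{m>0}\sigma^p_m$, and $\Sigma^p=\bigcup_{\sigma\in\Sigma}\sigma^p$. For a variety $\mathcal{V}$,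 its prolongation $\mathcal{V}^p$ is the variety defined by $\mathrm{Id}(\mathcal{V})^p$, where $\mathrm{Id}(\mathcal{V})$ is the set of all identities holding in $\mathcal{V}$. *)

(* Defs.v *)
From mathcomp Require Import all_boot.
Set Implicit Arguments. Unset Strict Implicit. Unset Printing Implicit Defensive.

Section UniversalAlgebra.
Variable O : Type.
Variable ar : O -> nat.

Definition plural : Prop := (forall o, 0 < ar o) /\ (exists o, 1 < ar o).

(* Omega-terms over the variables x_1, x_2, ... encoded as Var 0, Var 1, ... *)
Inductive term : Type :=
| Var : nat -> term
| App : forall o : O, ('I_(ar o) -> term) -> term.

Inductive occurs (k : nat) : term -> Prop :=
| occ_var : occurs k (Var k)
| occ_app : forall o (f : 'I_(ar o) -> term) (i : 'I_(ar o)),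
    occurs k (f i) -> occurs k (App f).

(* t \in T_n : the variables of t are exactly x_1..x_n (i.e. Var 0..Var (n-1)) *)
Definition in_T (n : nat) (t : term) : Prop := forall k, occurs k t <-> k < n.

Record algebra : Type := Algebra {
  carrier :> Type;
  op : forall o : O, ('I_(ar o) -> carrier) -> carrier }.

Fixpoint eval (A : algebra) (e : nat -> A) (t : term) : A :=
  match t with
  | Var k => e k
  | App o f => @op A o (fun i => eval e (f i))
  end.

Fixpoint subst (r : nat -> term) (t : term) : term :=
  match t with
  | Var k => r k
  | App o f => App (fun i => subst r (f i))
  end.

Definition identity := (term * term)%type.

Definition holds (A : algebra) (s : identity) : Prop :=
  forall e : nat -> A, eval e s.1 = eval e s.2.

Definition regular (s : identity) : Prop :=
  forall k, occurs k s.1 <-> occurs k s.2.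

Definition model (Sigma : identity -> Prop) (A : algebra) : Prop :=
  forall s, Sigma s -> holds A s.

Definition Id (V : algebra -> Prop) (s : identity) : Prop :=
  forall A : algebra, V A -> holds A s.

Definition prolong (Sigma : identity -> Prop) (s' : identity) : Prop :=
  exists s : identity, Sigma s /\
  exists n m : nat, 0 < m /\
    (forall k, occurs k s.1 \/ occurs k s.2 -> k < n) /\
    exists r : nat -> term,
      (forall i, i < n -> in_T m (r i)) /\
      s' = (subst r s.1, subst r s.2).

Definition congruence (A : algebra) (th : A -> A -> Prop) : Prop :=
  (forall x, th x x) /\ (forall x y, th x y -> th y x) /\
  (forall x y z, th x y -> th y z -> th x z) /\
  (forall o (f g : 'I_(ar o) -> A), (forall i, th (f i) (g i)) ->
      th (@op A o f) (@op A o g)).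

(* A/th is an Omega-semilattice: A/th satisfies every regular identity
   (an assignment into A/th is the class of an assignment into A). *)
Definition quotient_in_S (A : algebra) (th : A -> A -> Prop) : Prop :=
  forall s, regular s -> forall e : nat -> A, th (eval e s.1) (eval e s.2).

(* every th-class (a subalgebra of A, with the restricted operations)
   satisfies all identities of Sigma *)
Definition classes_in (Sigma : identity -> Prop) (A : algebra)
    (th : A -> A -> Prop) : Prop :=
  forall a : A, forall s, Sigma s -> forall e : nat -> A,
    (forall k, th a (e k)) -> eval e s.1 = eval e s.2.

Definition maltsev_S (Sigma : identity -> Prop) (A : algebra) : Prop :=
  exists th : A -> A -> Prop,
    congruence th /\ quotient_in_S th /\ classes_in Sigma th.

End UniversalAlgebra.

(* Main.v *)
Require Import Defs.
From mathcomp Require Import all_boot.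
From Stdlib Require Import FunctionalExtensionality ProofIrrelevance Setoid.
Set Implicit Arguments. Unset Strict Implicit. Unset Printing Implicit Defensive.

Lemma occurs_inv (O : Type) (ar : O -> nat) k (u : term ar) : occurs k u ->
  match u with Var k' => k = k' | App o f => exists i, occurs k (f i) end.
Proof. by case => [|o f i H]; [|exists i]. Qed.

Lemma eval_ext (O : Type) (ar : O -> nat) (A : algebra ar) (e1 e2 : nat -> A) (u : term ar) :
  (forall k, occurs k u -> e1 k = e2 k) -> eval e1 u = eval e2 u.
Proof.
elim: u => [k|o f IH] H /=; first by apply: H; constructor.
f_equal; apply: functional_extensionality => i; apply: IH => k Hk.
by apply: H; apply: (occ_app (i:=i)).
Qed.

Lemma eval_subst (O : Type) (ar : O -> nat) (A : algebra ar) (e : nat -> A) r (u : term ar) :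
  eval e (subst r u) = eval (fun k => eval e (r k)) u.
Proof.
elim: u => [k|o f IH] //=; f_equal; exact: functional_extensionality.
Qed.

Lemma occurs_subst (O : Type) (ar : O -> nat) r (u : term ar) j :
  occurs j (subst r u) <-> exists k, occurs k u /\ occurs j (r k).
Proof.
elim: u => [k|o f IH] /=.
  split; first by move=> H; exists k; split => //; constructor.
  by case=> k' [/occurs_inv -> ].
split.
  move=> /occurs_inv [i /IH [k [H1 H2]]]; exists k; split => //.
  exact: (occ_app (i:=i)).
case=> k [/occurs_inv [i Hi] H2]; apply: (occ_app (i:=i)); apply/IH.
by exists k.
Qed.

Fixpoint vars (O : Type) (ar : O -> nat) (u : term ar) : seq nat :=
  match u with
  | Var k => [:: k]
  | App o f => flatten (map (fun i => vars (f i)) (enum 'I_(ar o)))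
  end.

Lemma mem_vars (O : Type) (ar : O -> nat) (u : term ar) k : k \in vars u <-> occurs k u.
Proof.
elim: u => [k'|o f IH] /=.
  rewrite inE; split; first by move/eqP ->; constructor.
  by move/occurs_inv ->.
split.
  case/flattenP=> s /mapP [i _ ->] /IH H; exact: (occ_app (i:=i)).
move/occurs_inv => [i /IH H]; apply/flattenP; exists (vars (f i)) => //.
by apply/mapP; exists i; rewrite ?mem_enum.
Qed.

Lemma has_var (O : Type) (ar : O -> nat) (Hpl : plural ar) (u : term ar) :
  exists k, occurs k u.
Proof.
elim: u => [k|o f IH]; first by exists k; constructor.
have [k Hk] := IH (Ordinal (Hpl.1 o)); exists k; exact: occ_app Hk.
Qed.

Definition tA (O : Type) (ar : O -> nat) (t : term ar) (A : algebra ar) (a b : A) : A :=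
  eval (fun k => if k == 0 then a else b) t.
Definition tT (O : Type) (ar : O -> nat) (t : term ar) (u v : term ar) : term ar :=
  subst (fun k => if k == 0 then u else v) t.

Lemma eval_tT (O : Type) (ar : O -> nat) (t : term ar) (A : algebra ar) e u v :
  eval e (tT t u v) = tA t (eval e u) (eval e v) :> A.
Proof. by rewrite /tT eval_subst; apply: eval_ext => k _; case: (k == 0). Qed.

Lemma occurs_tT (O : Type) (ar : O -> nat) (t : term ar) (Ht : in_T 2 t) u v j :
  occurs j (tT t u v) <-> occurs j u \/ occurs j v.
Proof.
rewrite /tT occurs_subst; split.
  case=> k [/Ht Hk]; case: eqP => _; tauto.
case=> H; [exists 0 | exists 1]; split => //; exact/Ht.
Qed.

Lemma key (O : Type) (ar : O -> nat) (Hpl : plural ar) (t : term ar) (Ht : in_T 2 t)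
  (A : algebra ar) (HA : model (prolong (fun s => s = (t, Var ar 0))) A)
  (u v : term ar) (e : nat -> A) :
  (forall k, occurs k u <-> occurs k v) -> tA t (eval e u) (eval e v) = eval e u.
Proof.
move=> Huv.
set l := undup (vars u).
set ren := fun k => Var ar (index k l).
set e' := fun i => e (nth 0 l i).
have Ew : forall w, (forall k, occurs k w -> occurs k u) -> eval e w = eval e' (subst ren w).
  move=> w Hw; rewrite eval_subst; apply: eval_ext => k Hk /=.
  by rewrite /e' nth_index // mem_undup; apply/mem_vars/Hw.
have inT : forall w, (forall k, occurs k w <-> occurs k u) -> in_T (size l) (subst ren w).
  move=> w Hw j; rewrite occurs_subst; split.
    case=> k [Hk /occurs_inv ->]; rewrite index_mem mem_undup; apply/mem_vars/Hw/Hk.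
  move=> Hj; exists (nth 0 l j); split.
    by apply/Hw/mem_vars; rewrite -mem_undup; apply: mem_nth.
  by rewrite /ren index_uniq ?undup_uniq //; constructor.
have [k0 Hk0] := has_var Hpl u.
have m0 : 0 < size l.
  have : index k0 l < size l by rewrite index_mem mem_undup; apply/mem_vars.
  by case: (size l) => //.
set r := fun k => if k == 0 then subst ren u else subst ren v.
have Hp : prolong (fun s => s = (t, Var ar 0)) (subst r t, subst r (Var ar 0)).
  exists (t, Var ar 0); split => //; exists 2, (size l); split => //; split.
    by move=> k /= [/Ht|/occurs_inv ->].
  exists r; split => // i _; rewrite /r; case: (i == 0); apply: inT => //.
  by move=> k; split => /Huv.
have := HA _ Hp e'.
rewrite /= -/(tT t _ _) eval_tT -!Ew //; last by move=> k /Huv.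
Qed.

Lemma occ_var_iff (O : Type) (ar : O -> nat) j k : occurs j (Var ar k) <-> j = k.
Proof. by split; [move/occurs_inv|move=> ->; constructor]. Qed.

Lemma P3 (O : Type) (ar : O -> nat) (Hpl : plural ar) (t : term ar) (Ht : in_T 2 t)
  (A : algebra ar) (HA : model (prolong (fun s => s = (t, Var ar 0))) A) :
  maltsev_S (fun s => s = (t, Var ar 0)) A.
Proof.
have K := key Hpl Ht HA.
have refl : forall a : A, tA t a a = a.
  move=> a; exact: (K (Var ar 0) (Var ar 0) (fun _ => a)).
have trans : forall a b c : A, tA t a b = a -> tA t b c = b -> tA t c b = c ->
    tA t b a = b -> tA t a c = a.
  move=> a b c ab bc cb ba.
  pose e := fun k => if k == 0 then a else if k == 1 then b else c.
  pose U := tT t (Var ar 0) (tT t (Var ar 1) (Var ar 2)).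
  pose V := tT t (Var ar 2) (tT t (Var ar 1) (Var ar 0)).
  have := K U V e.
  rewrite /U /V !eval_tT /= bc ab ba cb; apply => k.
  rewrite !occurs_tT // !occ_var_iff; tauto.
pose th := fun a b : A => tA t a b = a /\ tA t b a = b.
exists th; split; [|split].
- split; first by move=> x; split; apply: refl.
  split; first by move=> x y [].
  split; first by move=> x y z [xy yx] [yz zy]; split; [apply: (trans x y z)|apply: (trans z y x)].
  move=> o f g Hfg.
  set k := ar o.
  have i0 : 'I_(ar o) := Ordinal (Hpl.1 o).
  pose e := fun j => if j < k then f (insubd i0 j) else g (insubd i0 (j - k)).
  have ef : forall i : 'I_(ar o), e i = f i.
    move=> i; rewrite /e ltn_ord; congr f; apply: val_inj; by rewrite val_insubd ltn_ord.
  have eg : forall i : 'I_(ar o), e (k + i) = g i.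
    move=> i; rewrite /e ltnNge leq_addr /= addKn; congr g; apply: val_inj; by rewrite val_insubd ltn_ord.
  pose U := App (fun i : 'I_(ar o) => tT t (Var ar i) (Var ar (k + i))).
  pose V := App (fun i : 'I_(ar o) => tT t (Var ar (k + i)) (Var ar i)).
  have eU : eval e U = op f.
    rewrite /=; congr op; apply: functional_extensionality => i.
    by rewrite eval_tT /= ef eg; case: (Hfg i).
  have eV : eval e V = op g.
    rewrite /=; congr op; apply: functional_extensionality => i.
    by rewrite eval_tT /= ef eg; case: (Hfg i).
  have occ : forall j, occurs j U <-> occurs j V.
    move=> j; split => /occurs_inv [i]; rewrite occurs_tT // !occ_var_iff => H;
      apply: (occ_app (i:=i)); rewrite occurs_tT // !occ_var_iff; tauto.
  split.
    by rewrite -eU -eV; apply: K.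
  rewrite -eU -eV; apply: K => j; split; apply occ.
- move=> s Hs e; split; apply: K => // k; split; apply Hs.
- move=> a s -> e He /=.
  have -> : eval e t = tA t (e 0) (e 1).
    apply: eval_ext => k /Ht; case: k => [|[|]] //.
  have [h1 h2] := He 0; have [h3 h4] := He 1.
  exact: (trans _ a _ h2 h3 h4 h1).
Qed.

Lemma P1 (O : Type) (ar : O -> nat) (Hpl : plural ar) (Sigma : identity ar -> Prop)
  (A : algebra ar) : maltsev_S Sigma A -> model (prolong (Id (model Sigma))) A.
Proof.
case=> th [[thr [ths [tht thc]]] [HS Hc]].
move=> s' [s [Hs [n [m [m0 [Hn [r [Hr ->]]]]]]]] e /=.
have [k0 Hk0] := has_var Hpl s.1.
have n0 : 0 < n by have := Hn k0 (or_introl Hk0); case: n {Hn Hr}.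
pose a := eval e (r 0).
pose r' := fun k => if k < n then r k else r 0.
have Hr' : forall k, in_T m (r' k) by move=> k; rewrite /r'; case: ifP => [H|_]; apply: Hr.
have tha : forall k, th a (eval e (r' k)).
  move=> k; apply: (HS (r 0, r' k)) => j /=.
  by rewrite (Hr 0 n0 j) (Hr' k j).
have idem : forall o (f : 'I_(ar o) -> A), (forall i, th a (f i)) -> th a (op f).
  move=> o f Hf; apply: (tht _ (op (fun _ : 'I_(ar o) => a))).
    apply: ths; apply: (HS (App (fun _ : 'I_(ar o) => Var ar 0), Var ar 0) _ (fun _ => a)).
    move=> j /=; split; first by move/occurs_inv => [i /occurs_inv ->]; constructor.
    move/occurs_inv => ->; apply: (occ_app (i:=Ordinal (Hpl.1 o))); constructor.
  by apply: thc.
pose B := @Algebra O ar {x : A | th a x}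
  (fun o f => exist _ (op (fun i => sval (f i))) (idem o _ (fun i => proj2_sig (f i)))).
have evB : forall (e' : nat -> B) u, sval (eval e' u) = eval (fun k => sval (e' k)) u.
  move=> e' u; elim: u => [k|o f IH] //=; congr op; exact: functional_extensionality.
have HB : model Sigma B.
  move=> s1 Hs1 e'; apply: eq_sig_hprop; first by move=> x p q; apply: proof_irrelevance.
  rewrite !evB; apply: (Hc a) => // k; exact: proj2_sig.
pose e' := fun k => exist (th a) (eval e (r' k)) (tha k) : B.
have := f_equal (@sval _ _) (Hs B HB e').
rewrite !evB /= !eval_subst => E.
have ext : forall u, (forall k, occurs k u -> k < n) ->
  eval (fun k => eval e (r k)) u = eval (fun k => eval e (r' k)) u.
  by move=> u Hu; apply: eval_ext => k /Hu; rewrite /r' => ->.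
rewrite !ext ?E // => k Hk; apply: Hn; tauto.
Qed.

Theorem theorem4p9 (O : Type) (ar : O -> nat) (Hpl : plural ar)
    (t : term ar) (Ht : in_T 2 t) :
  let Sigma_t : identity ar -> Prop := fun s => s = (t, Var ar 0) in
  (forall A : algebra ar,
      maltsev_S Sigma_t A <-> model (prolong (Id (model Sigma_t))) A) /\
  (forall A : algebra ar,
      maltsev_S Sigma_t A <-> model (prolong Sigma_t) A).
Proof.
move=> Sigma_t.
have P2 : forall A : algebra ar, model (prolong (Id (model Sigma_t))) A ->
    model (prolong Sigma_t) A.
  move=> A HA s [s0 [Hs0 rest]]; apply: HA; exists s0; split => //.
  by move=> B HB; apply: HB.
split=> A; split.
- exact: P1.
- by move=> H; apply: (P3 Hpl Ht); apply: P2.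
- by move=> H; apply: P2; apply: P1.
- exact: P3.
Qed.
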